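(* Let $G$ be a finite simple graph with a perfect matching $M$ and let $\mathcal{C}$ be an optimal edge $2$-colouring of $G$. Let $\mathcal{C}_M$ be the set of colours used on edges of $M$. For each $j\in\mathcal{C}_M$ let $S_j\subseteq V(G)$ be an $M$-monochromatic set such that the edges of $M$ incident with vertices of $S_j$ are coloured $j$. Then $$|\mathcal{C}_M|\le |M|-\sum_{j\in\mathcal{C}_M}\mathrm{rp}(S_j).$$
   Context: An edge $2$-colouring assigns colours to edges (not necessarily properly) so that each vertex sees at most $2$ distinct colours; optimal means it uses the maximum number of colours. A set $S\subseteq V(G)$ is $M$-monochromatic if all edges of $M$ incident with vertices of $S$ have the same colour. $i(S;M)$ denotes the number of edges of $M$ incident with a vertex of $S$, and the repetition content of an $M$-monochromatic set $S$ is $\mathrm{rp}(S):=i(S;M)-1$. *)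

(* Defs.v *)
From mathcomp Require Import all_boot all_order all_algebra.
Set Implicit Arguments. Unset Strict Implicit. Unset Printing Implicit Defensive.
Import GRing.Theory Num.Theory.

Section Graph.
Variables (V : finType) (e : rel V).

Definition simple_graph : Prop := symmetric e /\ irreflexive e.

Definition edges : {set {set V}} :=
  [set [set x; y] | x in V, y in V & e x y].

Definition perfect_matching (M : {set {set V}}) : Prop :=
  M \subset edges /\ forall v : V, #|[set f in M | v \in f]| = 1%N.

(* Colourings assign a colour (a natural number) to every edge; values
   outside the edge set are irrelevant. *)
Definition colours_at (c : {set V} -> nat) (v : V) : seq nat :=
  undup [seq c f | f <- [seq f <- enum edges | v \in (f : {set V})]].

Definition edge_2_colouring (c : {set V} -> nat) : Prop :=
  forall v : V, (size (colours_at c v) <= 2)%N.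

Definition ncolours (c : {set V} -> nat) : nat :=
  size (undup [seq c f | f <- enum edges]).

Definition optimal_edge_2_colouring (c : {set V} -> nat) : Prop :=
  edge_2_colouring c /\
  forall c' : {set V} -> nat, edge_2_colouring c' -> (ncolours c' <= ncolours c)%N.

Definition colours_on (c : {set V} -> nat) (M : {set {set V}}) : seq nat :=
  undup [seq c f | f <- enum M].

Definition incident_edges (M : {set {set V}}) (S : {set V}) : {set {set V}} :=
  [set f in M | [exists v in S, v \in f]].

Definition iSM (M : {set {set V}}) (S : {set V}) : nat := #|incident_edges M S|.

Definition M_monochromatic_col (c : {set V} -> nat) (M : {set {set V}})
    (S : {set V}) (j : nat) : Prop :=
  forall f, f \in incident_edges M S -> c f = j.

Definition rp (M : {set {set V}}) (S : {set V}) : int := ((iSM M S)%:Z - 1)%R.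

End Graph.

(* Main.v *)
From mathcomp Require Import all_boot all_order all_algebra.
Import GRing.Theory Num.Theory.
Lemma helper (T : eqType) (s : seq T) (b : pred T) x :
  uniq s -> (forall j, b j -> j = x) -> (\sum_(j <- s) (b j : nat) <= 1)%N.
Proof.
move=> us hb.
have -> : \sum_(j <- s) (b j : nat) = count b s.
  by rewrite -sumn_count sumnE big_map.
apply: (@leq_trans (count_mem x s)).
  by apply: sub_count => j /hb ->; rewrite /= eqxx.
by rewrite count_uniq_mem // leq_b1.
Qed.
From mathcomp Require Import zify.
Lemma sum_rp (g : nat -> nat) (s : seq nat) :
  (\sum_(j <- s) ((g j)%:Z - 1) = (\sum_(j <- s) g j)%N%:Z - (size s)%:Z)%R.
Proof.
elim: s => [|a s IH]; first by rewrite !big_nil.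
rewrite !big_cons IH /=; lia.
Qed.
Require Import Defs.
Local Open Scope ring_scope.
Theorem lemma7 (V : finType) (e : rel V) (M : {set {set V}})
    (c : {set V} -> nat) (S : nat -> {set V}) :
  simple_graph e ->
  perfect_matching e M ->
  optimal_edge_2_colouring e c ->
  (forall j, j \in colours_on c M -> M_monochromatic_col c M (S j) j) ->
  ((size (colours_on c M))%:Z <= (#|M|)%:Z - \sum_(j <- colours_on c M) rp M (S j)).
Proof.
move=> _ _ _ hS.
set s := colours_on c M.
have us : uniq s by apply: undup_uniq.
have key : (\sum_(j <- s) iSM M (S j) <= #|M|)%N.
  have E : forall j, iSM M (S j) = (\sum_(f in M) (f \in incident_edges M (S j) : nat))%N.
    move=> j; rewrite /iSM -sum1_card big_mkcond [RHS]big_mkcond /=; apply: eq_bigr => f _.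
    rewrite /incident_edges inE; by case: (f \in M); case: [exists _ in _, _].
  rewrite (eq_bigr _ (fun j _ => E j)) exchange_big /= -sum1_card.
  apply: leq_sum => f fM.
  have -> : (\sum_(j <- s) (f \in incident_edges M (S j) : nat) =
     \sum_(j <- s) ((j \in s) && (f \in incident_edges M (S j)) : nat))%N.
    by apply: eq_big_seq => j ->.
  apply: (@helper _ _ _ (c f)) => // j /andP [js fI].
  by rewrite (hS j js f fI).
rewrite (sum_rp (fun j => iSM M (S j))).
move: key; set k := (\sum_(j <- s) _)%N => key.
have : (k%:Z <= #|M|%:Z) by rewrite lez_nat.
lia.
Qed.
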